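(* Let $\bm X$ be an $n\times p$ matrix of full column rank and $\bm Z$ an $n\times q$ matrix, $q=q_1+\dots+q_r$. There exists a finite constant $\hat\varphi$, depending only on $\bm W=(\bm X,\bm Z)$ (and the block sizes $q_j$), such that for every $\bm\tau\in(0,\infty)^r$ and every $\bm l=(l_1,\dots,l_n)^T\in\mathbb{R}^n$, $$\big\|S(\bm\tau)^{-1}\bm Z^T(\bm I-P_X)\bm l\big\|\le\hat\varphi\sum_{i=1}^n|l_i|,$$ where $\|\cdot\|$ is the Euclidean norm.
   Context: $P_X=\bm X(\bm X^T\bm X)^{-1}\bm X^T$; $\bm D(\bm\tau)=\oplus_{j=1}^r\tau_j\bm I_{q_j}$; $S(\bm\tau)=\bm Z^T(\bm I-P_X)\bm Z+\bm D(\bm\tau)$. *)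

(* Defs.v *)
From HB Require Import structures.
From mathcomp Require Import all_boot all_order all_algebra.
Set Implicit Arguments. Unset Strict Implicit. Unset Printing Implicit Defensive.
Import Order.TTheory GRing.Theory Num.Theory.
Local Open Scope ring_scope.

Definition projX (R : rcfType) (n p : nat) (X : 'M[R]_(n, p)) : 'M[R]_n :=
  X *m invmx (X^T *m X) *m X^T.

Definition Dtau (R : rcfType) (r : nat) (qs : 'I_r -> nat) (tau : 'I_r -> R)
  : 'M[R]_(\sum_(j < r) qs j) :=
  \mxdiag_(j < r) ((tau j)%:M : 'M[R]_(qs j)).

Definition Stau (R : rcfType) (n p r : nat) (qs : 'I_r -> nat)
  (X : 'M[R]_(n, p)) (Z : 'M[R]_(n, \sum_(j < r) qs j)) (tau : 'I_r -> R)
  : 'M[R]_(\sum_(j < r) qs j) :=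
  Z^T *m (1%:M - projX X) *m Z + Dtau qs tau.

Definition enorm (R : rcfType) (m : nat) (v : 'cV[R]_m) : R :=
  Num.sqrt (\sum_(i < m) (v i 0) ^+ 2).

(* Main.v *)
Require Import Defs.
From mathcomp Require Import all_boot all_order all_algebra.
From mathcomp Require Import ring lra.
Set Implicit Arguments. Unset Strict Implicit. Unset Printing Implicit Defensive.
Import Order.TTheory GRing.Theory Num.Theory.
Local Open Scope ring_scope.

Section Core.
Variable R : rcfType.

Lemma abs_sq_le (a b : R) : 0 <= b -> a ^+ 2 <= b ^+ 2 -> `|a| <= b.
Proof.
move=> hb h; have e : `|a| ^+ 2 = a ^+ 2 by rewrite real_normK ?num_real.
have := normr_ge0 a; nra.
Qed.

Lemma elem_le_sum (I : finType) (F : I -> R) i :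
  (forall j, 0 <= F j) -> F i <= \sum_j F j.
Proof.
move=> h; rewrite (bigD1 i) //= lerDl sumr_ge0 // => j _; exact: h.
Qed.

Definition sqn n (v : 'cV[R]_n) := \sum_k (v k 0) ^+ 2.
Definition n1 n (v : 'cV[R]_n) := \sum_k `|v k 0|.

Lemma n1_ge0 n (v : 'cV[R]_n) : 0 <= n1 v.
Proof. by apply: sumr_ge0 => k _. Qed.

Lemma sqn_ge0 n (v : 'cV[R]_n) : 0 <= sqn v.
Proof. by apply: sumr_ge0 => k _; apply: sqr_ge0. Qed.

Lemma abs_le_n1 n (v : 'cV[R]_n) k : `|v k 0| <= n1 v.
Proof. by rewrite /n1; apply: (@elem_le_sum _ (fun k => `|v k 0|)) => j. Qed.

Lemma sq_le_sqn n (v : 'cV[R]_n) k : (v k 0) ^+ 2 <= sqn v.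
Proof. by rewrite /sqn; apply: (@elem_le_sum _ (fun k => (v k 0) ^+ 2)) => j; apply: sqr_ge0. Qed.

Lemma sqn_le_n1 n (v : 'cV[R]_n) : sqn v <= (n1 v) ^+ 2.
Proof.
rewrite /sqn /n1 expr2 mulr_suml; apply: ler_sum => i _.
rewrite -real_normK ?num_real // expr2; apply: ler_wpM2l => //.
exact: (abs_le_n1 v i).
Qed.

Lemma fin_choice (I : finType) (P : I -> R -> Prop) :
  (forall i c c', c <= c' -> P i c -> P i c') ->
  (forall i, exists c, P i c) -> exists c, forall i, P i c.
Proof.
move=> mono h.
suff: forall s : seq I, exists c, forall i, i \in s -> P i c.
  by case/(_ (enum I)) => c hc; exists c => i; apply: hc; rewrite mem_enum.
elim=> [|a s [c hc]]; first by exists 0.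
have [ca hca] := h a; exists (Num.max c ca) => i; rewrite inE => /orP[/eqP->|his].
  by apply: mono hca; rewrite le_max lexx orbT.
by apply: mono (hc _ his); rewrite le_max lexx.
Qed.

Lemma argmax_ex (I : finType) (S : {set I}) (d : I -> R) :
  S != set0 -> exists2 j, j \in S & forall i, i \in S -> d i <= d j.
Proof.
case/set0Pn => i0 hi0.
suff: forall s : seq I, exists2 j, j \in S & forall i, i \in s -> i \in S -> d i <= d j.
  by case/(_ (enum I)) => j hj hm; exists j => // i; apply: hm; rewrite mem_enum.
elim=> [|a s [j hj hm]]; first by exists i0.
case: (boolP (a \in S)) => haS.
  case: (leP (d a) (d j)) => hle.
    by exists j => // i; rewrite inE => /orP[/eqP->//|]; apply: hm.
  exists a => // i; rewrite inE => /orP[/eqP->//|his hiS].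
  by apply: le_trans (hm _ his hiS) _; apply: ltW.
exists j => // i; rewrite inE => /orP[/eqP-> h|]; last exact: hm.
by rewrite h in haS.
Qed.


Section Prob.
Variables (n q : nat) (A : 'M[R]_(n, q)).

Definition pen (d : 'I_q -> R) (u : 'cV[R]_q) := \sum_i d i * (u i 0) ^+ 2.
Definition fobj d (l : 'cV[R]_n) u := sqn (A *m u - l) + pen d u.
Definition supp (S : {set 'I_q}) (u : 'cV[R]_q) := forall i, i \notin S -> u i 0 = 0.
Definition Qb S C := forall d, (forall i, 0 < d i) -> forall l y, supp S y ->
  (forall u, supp S u -> fobj d l y <= fobj d l u) -> forall i, `|y i 0| <= C * n1 l.

Lemma Qb_mono S c c' : c <= c' -> Qb S c -> Qb S c'.
Proof.
move=> hc h d hd l y hy hm i; apply: le_trans (h d hd l y hy hm i) _.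
by apply: ler_wpM2r => //; apply: n1_ge0.
Qed.

Lemma pen_ge0 d u : (forall i, 0 < d i) -> 0 <= pen d u.
Proof. by move=> hd; apply: sumr_ge0 => i _; apply: mulr_ge0; [apply: ltW|apply: sqr_ge0]. Qed.

Lemma pen_add d (w e : 'cV[R]_q) (j : 'I_q) (c : R) : w j 0 = 0 ->
  e j 0 = 1 -> (forall i, i != j -> e i 0 = 0) ->
  pen d (w + c *: e) = pen d w + d j * c ^+ 2.
Proof.
move=> hw hej hei; rewrite /pen (bigD1 j) //= [in RHS](bigD1 j) //= !mxE hw hej.
rewrite (eq_bigr (fun i => d i * (w i 0) ^+ 2)); last first.
  by move=> i hij; rewrite !mxE hei // mulr0 addr0.
rewrite mulr1 expr0n /= mulr0 !add0r addrC.
by [].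
Qed.

End Prob.
Section Prob2.
Variables (n q : nat) (A : 'M[R]_(n, q)).
Local Notation pen := (@pen q).
Local Notation fobj := (fobj A).
Local Notation Qb := (Qb A).

Lemma n1B m (u v : 'cV[R]_m) : n1 (u - v) <= n1 u + n1 v.
Proof.
rewrite /n1 -big_split /=; apply: ler_sum => k _; rewrite !mxE; exact: ler_normB.
Qed.

Lemma sum_const_le m (F : 'I_m -> R) c : (forall k, F k <= c) -> \sum_k F k <= m%:R * c.
Proof.
move=> h; apply: le_trans (_ : _ <= \sum_(k < m) c) _; first by apply: ler_sum => k _.
by rewrite sumr_const card_ord mulr_natl.
Qed.

Lemma core_bound m : forall (S : {set 'I_q}), (#|S| <= m)%N -> exists C, Qb S C.
Proof.
elim: m => [|m IH] S hS.
  exists 0 => d hd l y hy hm i.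
  have -> : y i 0 = 0.
    apply: hy; move: hS; rewrite leqn0 => /eqP/cards0_eq ->; by rewrite inE.
  by rewrite normr0 mul0r.
case: (eqVneq S set0) => [hS0 | hS0].
  exists 0 => d hd l y hy hm i.
  by rewrite hy ?hS0 ?inE // normr0 mul0r.
have [C' hC'] : exists C', forall j, j \in S -> Qb (S :\ j) C'.
  apply: (@fin_choice _ (fun j c => j \in S -> Qb (S :\ j) c)).
    by move=> j c c' hc h hj; apply: Qb_mono hc (h hj).
  move=> j; case: (boolP (j \in S)) => hj; last by exists 0.
  have [C hC] := IH (S :\ j) ltac:(by move: hS; rewrite (cardsD1 j S) hj).
  by exists C.
set MS := diag_mx (\row_i ((i \in S)%:R : R)).
set G := MS *m pinvmx (A *m MS).
set g := \sum_i \sum_k `|G i k|.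
set a := \sum_k \sum_i `|A k i|.
set B1 := g * (2 * n%:R).
set C1 := Num.max C' 0.
have g0 : 0 <= g by apply: sumr_ge0 => i _; apply: sumr_ge0.
have a0 : 0 <= a by apply: sumr_ge0 => i _; apply: sumr_ge0.
have B10 : 0 <= B1 by apply: mulr_ge0 => //; apply: mulr_ge0.
have C10 : 0 <= C1 by rewrite le_max lexx orbT.
exists (Num.max B1 (C1 * (1 + B1 * a))).
move=> d hd l y hy hm.
have [j hjS hjmax] := argmax_ex d hS0.
have nl0 := n1_ge0 l.
have hAyl : sqn (A *m y - l) <= sqn l.
  have := hm 0 (fun i _ => mxE _ _ _ _).
  rewrite /fobj mulmx0 sub0r.
  have -> : pen d 0 = 0 by rewrite /pen big1 // => i _; rewrite mxE expr0n mulr0.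
  have -> : sqn (- l) = sqn l by apply: eq_bigr => k _; rewrite mxE sqrrN.
  have := pen_ge0 y hd; lra.
have hAy : n1 (A *m y) <= 2 * n%:R * n1 l.
  have -> : 2 * n%:R * n1 l = n%:R * (2 * n1 l) by ring.
  rewrite {1}/n1; apply: sum_const_le => k.
  have e1 : (A *m y) k 0 = (A *m y - l) k 0 + l k 0 by rewrite !mxE subrK.
  rewrite e1; apply: le_trans (ler_normD _ _) _.
  have h1 : `|(A *m y - l) k 0| <= n1 l.
    apply: abs_sq_le => //; apply: le_trans (sq_le_sqn _ k) _.
    by apply: le_trans hAyl (sqn_le_n1 l).
  have := abs_le_n1 l k; lra.
have hMy : MS *m y = y.
  apply/matrixP => i k; rewrite mul_diag_mx !mxE ord1.
  by case: (boolP (i \in S)) => hi; rewrite ?mul1r // mul0r hy.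
set y0 := G *m (A *m y).
have hAy0 : A *m y0 = A *m y.
  have K := mulmxKpV (submx_refl (A *m MS)).
  rewrite /y0 /G -{1}hMy; move: K; move: (pinvmx (A *m MS)) => P K.
  by rewrite !mulmxA -(mulmxA (A *m MS *m P) A MS) K -mulmxA hMy.
have hy0supp : supp S y0.
  move=> i hi; rewrite /y0 /G -mulmxA mul_diag_mx !mxE.
  by rewrite (negPf hi) mul0r.
have hy0b : n1 y0 <= g * n1 (A *m y).
  rewrite /g mulr_suml; apply: ler_sum => i _.
  rewrite /y0 mxE mulr_suml; apply: le_trans (ler_norm_sum _ _ _) _.
  apply: ler_sum => k _; rewrite normrM; apply: ler_wpM2l => //.
  exact: abs_le_n1.
have hyj : `|y j 0| <= B1 * n1 l.
  have := hm y0 hy0supp; rewrite /fobj hAy0 lerD2l => hp.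
  have hp2 : pen d y0 <= d j * sqn y0.
    rewrite /pen /sqn mulr_sumr; apply: ler_sum => i _.
    case: (boolP (i \in S)) => hi.
      by apply: ler_wpM2r; [apply: sqr_ge0 | apply: hjmax].
    by rewrite hy0supp // expr0n /= !mulr0.
  have hp3 : d j * (y j 0) ^+ 2 <= pen d y.
    rewrite /pen; apply: (@elem_le_sum _ (fun i => d i * (y i 0) ^+ 2)) => i.
    by apply: mulr_ge0; [apply: ltW|apply: sqr_ge0].
  have hdj := hd j.
  have hsq : (y j 0) ^+ 2 <= sqn y0.
    rewrite -(ler_pM2l hdj); apply: le_trans hp3 _; apply: le_trans hp hp2.
  have := abs_sq_le (n1_ge0 y0) (le_trans hsq (sqn_le_n1 y0)).
  move=> h; apply: le_trans h _; apply: le_trans hy0b _.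
  rewrite /B1 -mulrA; apply: ler_wpM2l => //.
set e : 'cV[R]_q := delta_mx j 0.
set c := y j 0.
set y' := y - c *: e.
set l' := l - A *m (c *: e).
have hej : e j 0 = 1 by rewrite /e mxE !eqxx.
have hei i : i != j -> e i 0 = 0 by move=> hij; rewrite /e mxE (negPf hij).
have hAe : A *m e = col j A by rewrite colE.
clearbody e.
have hy'j : y' j 0 = 0 by rewrite /y' !mxE hej mulr1 subrr.
have hyy' : y = y' + c *: e by rewrite /y' subrK.
have hsupp' : supp (S :\ j) y'.
  move=> i; rewrite in_setD1 negb_and negbK => /orP[/eqP->//|hi].
  have hij : i != j by apply: contraNneq hi => ->.
  by rewrite /y' !mxE hy // (hei _ hij) mulr0 subr0.
have hm' : forall u, supp (S :\ j) u -> fobj d l' y' <= fobj d l' u.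
  move=> u hu; have huj : u j 0 = 0 by apply: hu; rewrite !inE eqxx.
  have hsu : supp S (u + c *: e).
    move=> i hi; have hij : i != j by apply: contraNneq hi => ->.
    rewrite !mxE (hei _ hij) mulr0 addr0; apply: hu.
    by rewrite in_setD1 (negPf hi) andbF.
  have E z : A *m (z + c *: e) - l = A *m z - l' by rewrite /l' mulmxDr opprB addrA addrAC.
  have hpy : pen d y = pen d y' + d j * c ^+ 2.
    by rewrite {1}hyy' (pen_add _ _ hy'j hej hei).
  have hAy' : A *m y - l = A *m y' - l' by rewrite {1}hyy' E.
  have := hm _ hsu; rewrite /fobj (pen_add _ _ huj hej hei) hpy hAy' E.
  by rewrite !addrA lerD2r.
have hb' := hC' j hjS d hd l' y' hsupp' hm'.
have hl' : n1 l' <= (1 + B1 * a) * n1 l.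
  apply: le_trans (n1B _ _) _.
  have hce : n1 (A *m (c *: e)) <= `|c| * a.
    rewrite /n1 /a mulr_sumr; apply: ler_sum => k _.
    rewrite -scalemxAr hAe !mxE normrM; apply: ler_wpM2l => //.
    by apply: (@elem_le_sum _ (fun i => `|A k i|)).
  have : `|c| * a <= B1 * n1 l * a by apply: ler_wpM2r.
  nra.
move=> i; case: (eqVneq i j) => [->|hij].
  apply: le_trans hyj _; apply: ler_wpM2r => //; rewrite le_max lexx //.
have -> : y i 0 = y' i 0 by rewrite /y' !mxE (hei _ hij) mulr0 subr0.
apply: le_trans (hb' i) _.
apply: le_trans (_ : C1 * n1 l' <= _).
  by apply: ler_wpM2r; [apply: n1_ge0 | rewrite le_max lexx].
apply: le_trans (_ : C1 * ((1 + B1 * a) * n1 l) <= _).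
  by apply: ler_wpM2l.
rewrite mulrA; apply: ler_wpM2r => //; rewrite le_max lexx orbT //.
Qed.

End Prob2.

Lemma unit_of_inj k (M : 'M[R]_k) : (forall v : 'rV[R]_k, v *m M = 0 -> v = 0) -> M \in unitmx.
Proof.
move=> h; rewrite -row_free_unit -kermx_eq0; apply/rowV0P => v /sub_kermxP; exact: h.
Qed.

Lemma ttE m (w : 'cV[R]_m) : (w^T *m w) 0 0 = sqn w.
Proof. by rewrite mxE; apply: eq_bigr => k _; rewrite !mxE expr2. Qed.

Lemma quadD q (dv : 'rV[R]_q) u : (u^T *m diag_mx dv *m u) 0 0 = pen (fun i => dv 0 i) u.
Proof.
rewrite -mulmxA mul_diag_mx mxE; apply: eq_bigr => i _; rewrite !mxE.
by rewrite mulrCA expr2.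
Qed.

Lemma quadS n q (A : 'M[R]_(n, q)) (dv : 'rV[R]_q) u :
  (u^T *m (A^T *m A + diag_mx dv) *m u) 0 0 = sqn (A *m u) + pen (fun i => dv 0 i) u.
Proof.
rewrite mulmxDr mulmxDl mxE quadD -ttE trmx_mul !mulmxA //.
Qed.

Lemma minimizer n q (A : 'M[R]_(n, q)) (dv : 'rV[R]_q) l y :
  (A^T *m A + diag_mx dv) *m y = A^T *m l -> (forall i, 0 < dv 0 i) ->
  forall u, fobj A (fun i => dv 0 i) l y <= fobj A (fun i => dv 0 i) l u.
Proof.
move=> hS hd u; set h := u - y.
have -> : u = y + h by rewrite /h addrC subrK.
set r := A *m y - l.
have e1 : A *m (y + h) - l = r + A *m h by rewrite mulmxDr /r addrAC.
have hz : A^T *m r + diag_mx dv *m y = 0.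
  by rewrite /r mulmxBr mulmxA addrAC -mulmxDl hS subrr.
have hr : A *m y - l = r by [].
clearbody r.
have cross : \sum_k r k 0 * (A *m h) k 0 + \sum_i dv 0 i * (y i 0 * h i 0) = 0.
  have hz' : ((A^T *m r + diag_mx dv *m y)^T *m h) 0 0 = 0.
    by rewrite hz trmx0 mul0mx mxE.
  transitivity (((A^T *m r + diag_mx dv *m y)^T *m h) 0 0); last exact: hz'.
  rewrite mxE.
  have -> : \sum_k r k 0 * (A *m h) k 0 = \sum_i (A^T *m r) i 0 * h i 0.
    transitivity ((r^T *m (A *m h)) 0 0).
      by rewrite [RHS]mxE; apply: eq_bigr => k _; rewrite !mxE.
    rewrite mulmxA -[r^T *m A]trmxK trmx_mul trmxK mxE; apply: eq_bigr => i _.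
    by rewrite mxE.
  rewrite -big_split /=; apply: eq_bigr => i _.
  rewrite mul_diag_mx !mxE.
  by rewrite mulrDl mulrA.
rewrite /fobj e1.
have -> : sqn (r + A *m h) = sqn r + 2 * \sum_k r k 0 * (A *m h) k 0 + sqn (A *m h).
  rewrite /sqn mulr_sumr -!big_split /=; apply: eq_bigr => k _; rewrite !mxE; ring.
have -> : pen (fun i => dv 0 i) (y + h) = pen (fun i => dv 0 i) y
    + 2 * \sum_i dv 0 i * (y i 0 * h i 0) + pen (fun i => dv 0 i) h.
  rewrite /pen mulr_sumr -!big_split /=; apply: eq_bigr => k _; rewrite !mxE; ring.
have := sqn_ge0 (A *m h); have := @pen_ge0 _ (fun i => dv 0 i) h hd.
rewrite hr; move: cross; lra.
Qed.



Lemma sqn0 m (w : 'cV[R]_m) : sqn w = 0 -> w = 0.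
Proof.
move=> h; apply/matrixP => k j; rewrite ord1 mxE.
have := @psumr_eq0P _ _ predT (fun k => (w k 0) ^+ 2) (fun i _ => sqr_ge0 _) h k isT.
by move/eqP; rewrite sqrf_eq0 => /eqP.
Qed.

Lemma pen0 q (d : 'I_q -> R) (w : 'cV[R]_q) : (forall i, 0 < d i) -> pen d w = 0 -> w = 0.
Proof.
move=> hd h; apply/matrixP => k j; rewrite ord1 mxE.
have hnn : forall i, predT i -> 0 <= d i * (w i 0) ^+ 2.
  by move=> i _; apply: mulr_ge0; [apply: ltW|apply: sqr_ge0].
have := @psumr_eq0P _ _ predT (fun k => d k * (w k 0) ^+ 2) hnn h k isT.
by move/eqP; rewrite mulf_eq0 sqrf_eq0 (gt_eqF (hd k)) /= => /eqP.
Qed.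

Lemma Dtau_diag r (qs : 'I_r -> nat) (tau : 'I_r -> R) :
  is_diag_mx (Dtau qs tau).
Proof.
rewrite /Dtau /mxdiag; apply/is_diag_mxblockP; split.
  by move=> i j hij; rewrite (negbTE hij).
by move=> i; rewrite eqxx conform_mx_id scalar_mx_is_diag.
Qed.

Lemma Dtau_entry r (qs : 'I_r -> nat) (tau : 'I_r -> R) k :
  Dtau qs tau k k = tau (tagnat.sig1 k).
Proof.
rewrite /Dtau /mxdiag mxE eqxx conform_mx_id mxE eqxx mulr1n //.
Qed.

End Core.

Unset Implicit Arguments.

Theorem lemma2 (R : rcfType) (n p r : nat) (qs : 'I_r -> nat)
  (X : 'M[R]_(n, p)) (Z : 'M[R]_(n, \sum_(j < r) qs j))
  (hX : \rank X = p) :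
  exists phi : R, forall (tau : 'I_r -> R), (forall j, 0 < tau j) ->
    forall l : 'cV[R]_n,
      enorm (invmx (Stau X Z tau) *m Z^T *m (1%:M - projX X) *m l)
        <= phi * \sum_(i < n) `|l i 0|.
Proof.
set P := projX X.
set M := 1%:M - P.
have hXX : X^T *m X \in unitmx.
  apply: unit_of_inj => v hv.
  have hrf : row_free X^T by rewrite /row_free mxrank_tr hX.
  have h1 : ((X *m v^T)^T *m (X *m v^T)) 0 0 = 0.
    by rewrite trmx_mul trmxK mulmxA -(mulmxA v) hv mul0mx mxE.
  rewrite ttE in h1; have h2 := sqn0 h1.
  have h3 : v *m X^T = 0 by rewrite -[v]trmxK -trmx_mul h2 trmx0.
  by apply/eqP; rewrite -(mulmx_free_eq0 _ hrf) h3.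
have hPt : P^T = P.
  by rewrite /P /projX !trmx_mul trmxK trmx_inv trmx_mul trmxK mulmxA.
have hPP : P *m P = P.
  rewrite /P /projX !mulmxA.
  by rewrite -(mulmxA (X *m invmx (X^T *m X)) X^T X) (mulmxKV hXX).
have hMt : M^T = M by rewrite /M linearB /= trmx1 hPt.
have hMM : M *m M = M.
  rewrite /M mulmxBl !mulmxBr !mul1mx !mulmx1 hPP subrr subr0.
  by [].
set A := M *m Z.
have hAt : A^T = Z^T *m M by rewrite /A trmx_mul hMt.
have hAtA : A^T *m A = Z^T *m M *m Z by rewrite hAt /A -!mulmxA (mulmxA M M) hMM.
set q := (\sum_(j < r) qs j)%N.
have [C hC] := @core_bound _ _ _ A #|[set: 'I_q]| [set: 'I_q] (leqnn _).
exists (q%:R * Num.max C 0).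
move=> tau htau l.
have /diag_mxP [dv hdv] := Dtau_diag qs tau.
have hdpos i : 0 < dv 0 i.
  have := @Dtau_entry _ _ qs tau i; rewrite hdv mxE eqxx mulr1n => ->; exact: htau.
have hS : Stau X Z tau = A^T *m A + diag_mx dv by rewrite /Stau -/P -/M hAtA hdv.
have hSu : (A^T *m A + diag_mx dv) \in unitmx.
  apply: unit_of_inj => v hv.
  have h1 : ((v^T)^T *m (A^T *m A + diag_mx dv) *m v^T) 0 0 = 0.
    by rewrite trmxK hv mul0mx mxE.
  rewrite quadS in h1.
  have h2 : pen (fun i => dv 0 i) v^T = 0.
    have := sqn_ge0 (A *m v^T); have := @pen_ge0 _ _ (fun i => dv 0 i) v^T hdpos.
    move: h1; lra.
  by rewrite -[v]trmxK (pen0 hdpos h2) trmx0.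
rewrite -/P -/M hS -!mulmxA.
set y := invmx _ *m _.
have hy : (A^T *m A + diag_mx dv) *m y = A^T *m l.
  by rewrite /y mulKVmx // hAt mulmxA.
have hmin := minimizer hy hdpos.
have hb := hC (fun i => dv 0 i) hdpos l y (fun i hi => ltac:(by rewrite inE in hi))
  (fun u _ => hmin u).
set C0 := Num.max C 0.
have hC0 : 0 <= C0 by rewrite le_max lexx orbT.
have hL := n1_ge0 l.
have hyi i : `|y i 0| <= C0 * n1 l.
  by apply: le_trans (hb i) _; apply: ler_wpM2r => //; rewrite le_max lexx.
have hsq : sqn y <= q%:R * (C0 * n1 l) ^+ 2.
  rewrite {1}/sqn; apply: sum_const_le => i.
  have e : `|y i 0| ^+ 2 = (y i 0) ^+ 2 by rewrite real_normK ?num_real.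
  have := hyi i; have := normr_ge0 (y i 0); nra.
have hq : q%:R * (C0 * n1 l) ^+ 2 <= (q%:R * C0 * n1 l) ^+ 2.
  have hqq : (q%:R : R) <= q%:R * q%:R by rewrite -natrM ler_nat; case: (q) => // k; rewrite leq_pmulr.
  have := sqr_ge0 (C0 * n1 l); nra.
change (Num.sqrt (sqn y) <= q%:R * C0 * n1 l).
apply: le_trans (ler_wsqrtr (le_trans hsq hq)) _.
rewrite sqrtr_sqr ger0_norm //; apply: mulr_ge0 => //; apply: mulr_ge0 => //.
Qed.
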